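(* Let $H\in\mathbb{R}^{n\times n}$ be symmetric with $\lambda_{\min}(H)<0$ and unit eigenvector $v_1$ for $\lambda_{\min}(H)$, let $g\in\mathbb{R}^n$ with $g^\intercal v_1\neq0$, let $f(z)=\frac12z^\intercal Hz+g^\intercal z$ and $\beta=\|H\|_{\mathrm{op}}$. Let $0<\eta<1/\beta$ and $z_0=-\alpha\frac{g}{\|g\|}$ with $0<\alpha<\min\big(1,\frac{\|g\|^3}{|g^\intercal Hg|}\big)$, and let $z_{t+1}=z_t-\eta\nabla f(z_t)$. Then, as long as the iterates remain in the region $\|z_t\|<1$ (where the projected/proximal gradient step onto the unit ball coincides with this plain gradient step), $\|z_t\|$ is monotonically nondecreasing in $t$.
   Context: $\nabla f(z)=Hz+g$; $\|H\|_{\mathrm{op}}$ is the operator norm. *)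

(* Defs.v *)
From HB Require Import structures.
From mathcomp Require Import all_boot all_order all_algebra.
From mathcomp Require Import classical_sets reals.
Set Implicit Arguments. Unset Strict Implicit. Unset Printing Implicit Defensive.
Import Order.TTheory GRing.Theory Num.Theory.
Local Open Scope ring_scope.

Definition vnorm (R : realType) (n : nat) (v : 'cV[R]_n) : R :=
  Num.sqrt (\sum_(i < n) v i 0 ^+ 2).

Definition dotv (R : realType) (n : nat) (u v : 'cV[R]_n) : R :=
  (u^T *m v) 0 0.

Definition opnorm (R : realType) (n : nat) (H : 'M[R]_n) : R :=
  reals.sup [set r : R | exists x : 'cV[R]_n, vnorm x = 1 /\ r = vnorm (H *m x)]%classic.

Definition is_lambda_min (R : realType) (n : nat) (H : 'M[R]_n) (lam : R) : Prop :=
  eigenvalue H lam /\ forall mu : R, eigenvalue H mu -> lam <= mu.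

Definition quad_f (R : realType) (n : nat) (H : 'M[R]_n) (g z : 'cV[R]_n) : R :=
  2^-1 * dotv z (H *m z) + dotv g z.

Definition grad_f (R : realType) (n : nat) (H : 'M[R]_n) (g z : 'cV[R]_n) : 'cV[R]_n :=
  H *m z + g.

(* Main.v *)
Require Import Defs.
From HB Require Import structures.
From mathcomp Require Import all_boot all_order all_algebra.
From mathcomp Require Import boolp classical_sets reals.
From mathcomp Require Import ring lra.
Import Order.TTheory GRing.Theory Num.Theory.
Local Open Scope ring_scope.

Section S.
Context {R : realType} {n : nat}.
Implicit Types (u v w : 'cV[R]_n) (M : 'M[R]_n).

Lemma dotvE u v : dotv u v = \sum_i u i 0 * v i 0.
Proof. by rewrite /dotv !mxE; apply: eq_bigr => i _; rewrite !mxE. Qed.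

Lemma dotvC u v : dotv u v = dotv v u.
Proof. by rewrite !dotvE; apply: eq_bigr => i _; rewrite mulrC. Qed.

Lemma dotvDr u v w : dotv u (v + w) = dotv u v + dotv u w.
Proof. by rewrite !dotvE -big_split; apply: eq_bigr => i _; rewrite !mxE mulrDr. Qed.

Lemma dotvZr k u v : dotv u (k *: v) = k * dotv u v.
Proof. by rewrite !dotvE mulr_sumr; apply: eq_bigr => i _; rewrite !mxE mulrCA. Qed.

Lemma dotvNr u v : dotv u (- v) = - dotv u v.
Proof. by rewrite -scaleN1r dotvZr mulN1r. Qed.

Lemma dotvBr u v w : dotv u (v - w) = dotv u v - dotv u w.
Proof. by rewrite dotvDr dotvNr. Qed.

Lemma dotvDl u v w : dotv (u + v) w = dotv u w + dotv v w.
Proof. by rewrite dotvC dotvDr !(dotvC w). Qed.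

Lemma dotvZl k u v : dotv (k *: u) v = k * dotv u v.
Proof. by rewrite dotvC dotvZr dotvC. Qed.

Lemma dotvNl u v : dotv (- u) v = - dotv u v.
Proof. by rewrite dotvC dotvNr dotvC. Qed.

Lemma dotvBl u v w : dotv (u - v) w = dotv u w - dotv v w.
Proof. by rewrite dotvDl dotvNl. Qed.

Lemma dotv_mul M u v : dotv (M *m u) v = dotv u (M^T *m v).
Proof. by rewrite /dotv trmx_mul mulmxA. Qed.

Lemma dotv_ge0 u : 0 <= dotv u u.
Proof. by rewrite dotvE sumr_ge0 // => i _; rewrite -expr2 sqr_ge0. Qed.

Lemma vnorm_sq u : vnorm u ^+ 2 = dotv u u.
Proof.
rewrite /vnorm sqr_sqrtr ?dotvE; last by rewrite sumr_ge0 // => i _; rewrite sqr_ge0.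
by apply: eq_bigr => i _; rewrite expr2.
Qed.

Lemma vnorm_ge0 u : 0 <= vnorm u.
Proof. exact: sqrtr_ge0. Qed.

Lemma vnormZ k u : vnorm (k *: u) = `|k| * vnorm u.
Proof.
apply: (@pexpIrn _ 2) => //; rewrite ?nnegrE ?mulr_ge0 ?vnorm_ge0 //.
by rewrite exprMn vnorm_sq dotvZl dotvZr -vnorm_sq real_normK ?num_real // mulrA expr2.
Qed.

Lemma dotv_eq0 u : dotv u u = 0 -> u = 0.
Proof.
rewrite dotvE => /psumr_eq0P H0; apply/matrixP => i j; rewrite (ord1 j) mxE.
have := H0 (fun i _ => ltac:(by rewrite -expr2 sqr_ge0)) i isT; rewrite -expr2 => /eqP.
by rewrite sqrf_eq0 => /eqP.
Qed.

Lemma vnorm_eq0 u : vnorm u = 0 -> u = 0.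
Proof. by move=> h; apply: dotv_eq0; rewrite -vnorm_sq h expr2 mulr0. Qed.

Lemma opnorm_bound (H : 'M[R]_n) x : 0 < opnorm H ->
  vnorm (H *m x) <= opnorm H * vnorm x.
Proof.
move=> hp.
have [hx|hx] := eqVneq (vnorm x) 0.
  by rewrite hx (vnorm_eq0 _ hx) mulmx0 mulr0 /vnorm big1 ?sqrtr0 // => i _; rewrite mxE expr2 mulr0.
have xp : 0 < vnorm x by rewrite lt_def hx vnorm_ge0.
set x' := (vnorm x)^-1 *: x.
have x'1 : vnorm x' = 1.
  by rewrite vnormZ ger0_norm ?invr_ge0 ?vnorm_ge0 // mulVf.
have [hs|hs] := pselect (has_sup [set r : R | exists x : 'cV[R]_n, vnorm x = 1 /\ r = vnorm (H *m x)]%classic); last first.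
  by move: hp; rewrite /opnorm sup_out // ltxx.
have := sup_upper_bound hs (ex_intro _ x' (conj x'1 erefl)).
rewrite -/(opnorm H) /x' -scalemxAr vnormZ ger0_norm ?invr_ge0 ?vnorm_ge0 //.
move=> h; have := ler_wpM2r (vnorm_ge0 x) h.
by rewrite mulrAC mulVf // mul1r.
Qed.

Lemma quad_le (H : 'M[R]_n) y : 0 < opnorm H ->
  dotv y (H *m y) <= opnorm H * dotv y y.
Proof.
move=> hp; set b := opnorm H.
have h1 := dotv_ge0 (b *: y - H *m y).
have h2 : dotv (H *m y) (H *m y) <= b ^+ 2 * dotv y y.
  have n1 : b * vnorm y \in Num.nneg by rewrite nnegrE mulr_ge0 ?vnorm_ge0 ?(ltW hp).
  have n2 : vnorm (H *m y) \in Num.nneg by rewrite nnegrE vnorm_ge0.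
  rewrite -!vnorm_sq -exprMn ler_pXn2r //.
  exact: opnorm_bound.
move: h1; rewrite !(dotvBl, dotvBr, dotvZl, dotvZr) (dotvC (H *m y)).
move=> h1.
have : 2 * b * dotv y (H *m y) <= 2 * b * (b * dotv y y) by nra.
by rewrite ler_pM2l ?mulr_gt0.
Qed.
End S.

Section Main.
Variables (R : realType) (n : nat) (H : 'M[R]_n) (eta : R).
Hypothesis HT : H^T = H.
Hypothesis etap : 0 < eta.
Hypothesis etab : eta * opnorm H < 1.
Hypothesis bp : 0 < opnorm H.
Let A : 'M[R]_n := 1%:M - eta *: H.

Lemma AT : A^T = A.
Proof. by rewrite /A linearB /= trmx1 linearZ /= HT. Qed.

Lemma A_psd y : 0 <= dotv y (A *m y).
Proof.
rewrite /A mulmxBl mul1mx -scalemxAl dotvBr dotvZr.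
have h1 := quad_le H y bp; have h2 := dotv_ge0 y.
have h3 : 0 <= eta * (opnorm H * dotv y y - dotv y (H *m y)) by rewrite mulr_ge0 ?subr_ge0 ?(ltW etap).
have h4 : 0 <= (1 - eta * opnorm H) * dotv y y by rewrite mulr_ge0 ?subr_ge0 ?(ltW etab).
nra.
Qed.

Lemma ApT k : (A ^+ k)^T = A ^+ k.
Proof.
elim: k => [|k IH]; first by rewrite expr0 trmx1.
rewrite exprS -mulmxE trmx_mul IH AT.
by rewrite mulmxE -exprSr exprS.
Qed.

Lemma ApD a b (x : 'cV[R]_n) : A ^+ a *m (A ^+ b *m x) = A ^+ (a + b) *m x.
Proof. by rewrite mulmxA mulmxE -exprD. Qed.

Lemma dotvAp k u v : dotv (A ^+ k *m u) v = dotv u (A ^+ k *m v).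
Proof. by rewrite dotv_mul ApT. Qed.

Lemma Ap_psd k x : 0 <= dotv (A ^+ k *m x) x.
Proof.
suff : forall k x, 0 <= dotv (A ^+ k *m x) x /\ 0 <= dotv (A ^+ k.+1 *m x) x.
  by move=> /(_ k x) [].
elim=> [|m IH] y.
  split; first by rewrite expr0 mul1mx dotv_ge0.
  by rewrite expr1 dotvC A_psd.
split; first by case: (IH y).
have -> : A ^+ m.+2 *m y = A *m (A ^+ m *m (A *m y)).
  by rewrite !mulmxA !mulmxE -exprS -exprSr.
rewrite dotv_mul AT; by case: (IH (A *m y)).
Qed.

Lemma ApS k (x : 'cV[R]_n) : A *m (A ^+ k *m x) = A ^+ k.+1 *m x.
Proof. by rewrite mulmxA mulmxE -exprS. Qed.

Lemma ApSr k (x : 'cV[R]_n) : A ^+ k *m (A *m x) = A ^+ k.+1 *m x.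
Proof. by rewrite mulmxA mulmxE -exprSr. Qed.

Lemma key (g : 'cV[R]_n) (c : R) (z : nat -> 'cV[R]_n) : 0 < c ->
  c * dotv g (H *m g) < dotv g g -> z 0%N = - c *: g ->
  (forall t, z t.+1 = z t - eta *: (H *m z t + g)) ->
  forall t, 0 <= dotv (z t) (z t.+1 - z t).
Proof.
move=> cp cb z0 hz.
pose u t := z t.+1 - z t.
have uE t : u t = - eta *: (H *m z t + g).
  by rewrite /u hz addrAC subrr add0r scaleNr.
have zS t : z t.+1 = z t + u t by rewrite /u addrC subrK.
have uA t : u t.+1 = A *m u t.
  rewrite uE zS mulmxDr -addrA (addrC (H *m u t)) addrA scalerDr -uE.
  by rewrite /A mulmxBl mul1mx -scalemxAl scaleNr.
have zA t : z t.+1 = A *m z t - eta *: g.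
  by rewrite hz /A mulmxBl mul1mx -scalemxAl scalerDr opprD addrA.
pose w := g - c *: (H *m g).
have u0 : u 0%N = - eta *: w.
  by rewrite uE z0 -scalemxAr; congr (_ *: _); rewrite scaleNr addrC.
have ut t : u t = - eta *: (A ^+ t *m w).
  elim: t => [|t IH]; first by rewrite expr0 mul1mx.
  by rewrite uA IH -scalemxAr ApS.
change (forall t, 0 <= dotv (z t) (u t)).
have [cle|clt] := lerP c eta.
-
  pose r t := - z t.
  have rS t : r t.+1 = A *m r t + eta *: g.
    rewrite /r zS uE /A mulmxBl mul1mx -scalemxAl mulmxN.
    by rewrite scalerN opprK scaleNr opprD opprK scalerDr addrA.
  have J t : forall a, 0 <= dotv (r t) (A ^+ a *m g).
    elim: t => [|t IH] a.
      rewrite /r z0 scaleNr opprK dotvZl mulr_ge0 ?(ltW cp) //.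
      by rewrite dotvC Ap_psd.
    rewrite rS dotvDl dotvZl dotv_mul AT ApS addr_ge0 ?IH //.
    by rewrite mulr_ge0 ?(ltW etap) // dotvC Ap_psd.
  have wE : w = (1 - c / eta) *: g + (c / eta) *: (A *m g).
    rewrite /w /A mulmxBl mul1mx -scalemxAl scalerBr scalerA.
    rewrite mulfVK ?gt_eqF // scalerBl scale1r addrA subrK //.
  move=> t; rewrite ut dotvZr -[z t]opprK -/(r t) dotvNl mulrN mulNr opprK.
  rewrite mulr_ge0 ?(ltW etap) // wE mulmxDr -!scalemxAr dotvDr !dotvZr.
  rewrite ApSr; apply: addr_ge0; apply: mulr_ge0; rewrite ?J //.
    by rewrite subr_ge0 ler_pdivrMr // mul1r.
  by rewrite divr_ge0 ?(ltW cp) ?(ltW etap).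
-
  pose rho := 1 - eta / c.
  have rhop : 0 <= rho by rewrite subr_ge0 ler_pdivrMr // mul1r ltW.
  pose D : 'M[R]_n := 1%:M - c *: H.
  have DT : D^T = D by rewrite /D linearB /= trmx1 linearZ /= HT.
  have DA : D *m A = A *m D.
    rewrite /D /A !mulmxBl !mulmxBr !mul1mx !mulmx1 -!scalemxAl -!scalemxAr.
    rewrite !scalerA mulrC.
    set X := (_ *: (H *m H)); rewrite !opprB !addrA (addrAC _ X) (addrAC _ X).
    by rewrite (addrAC 1%:M).
  have wD : w = D *m g by rewrite /D mulmxBl mul1mx -scalemxAl.
  have AE (v : 'cV[R]_n) : A *m v = rho *: v + (eta / c) *: (D *m v).
    rewrite /A /D !mulmxBl !mul1mx -!scalemxAl scalerBr scalerA.
    rewrite mulfVK ?gt_eqF // /rho scalerBl scale1r addrA subrK //.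
  pose p t := A ^+ t *m w.
  pose q t := - (D *m z t).
  have qS t : q t.+1 = A *m q t + eta *: w.
    by rewrite /q zA mulmxBr mulmxA DA -mulmxA -scalemxAr -wD opprB mulmxN addrC.
  have I t : forall a, 0 <= dotv (A ^+ a *m p t) (q t).
    elim: t => [|t IH] a.
      rewrite /p /q z0 expr0 mul1mx -scalemxAr scaleNr opprK -wD dotvZr.
      by rewrite mulr_ge0 ?(ltW cp) ?Ap_psd.
    rewrite qS /p ApD dotvDr dotvZr -[A in dotv _ (A *m _)]AT -dotv_mul ApS.
    apply: addr_ge0; last by rewrite mulr_ge0 ?(ltW etap) ?Ap_psd.
    by have := IH a.+2; rewrite /p ApD addSn addnS.
  elim=> [|t IH].
    rewrite ut z0 expr0 mul1mx dotvZl dotvZr /w dotvBr dotvZr.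
    rewrite mulrA mulrNN; apply: mulr_ge0; first by apply: mulr_ge0; apply: ltW.
    by rewrite subr_ge0 ltW.
  rewrite zS uA dotvDl addrC; apply: addr_ge0; first exact: A_psd.
  rewrite AE dotvDr !dotvZr; apply: addr_ge0; first by apply: mulr_ge0.
  apply: mulr_ge0; first by rewrite divr_ge0 // ltW.
  rewrite -[D]DT -dotv_mul -[D *m z t]opprK -/(q t) ut dotvNl dotvZr mulNr opprK.
  apply: mulr_ge0; first exact: ltW.
  by have := I t 0%N; rewrite expr0 mul1mx dotvC.
Qed.
End Main.

Theorem mainTheorem5 (R : realType) (n : nat) (H : 'M[R]_n) (g v1 : 'cV[R]_n)
    (lam eta alpha : R) (z : nat -> 'cV[R]_n) :
  H^T = H ->
  is_lambda_min H lam -> lam < 0 ->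
  H *m v1 = lam *: v1 -> vnorm v1 = 1 ->
  dotv g v1 != 0 ->
  0 < eta -> eta < 1 / opnorm H ->
  0 < alpha -> alpha < 1 -> alpha * `|dotv g (H *m g)| < vnorm g ^+ 3 ->
  z 0%N = - (alpha / vnorm g) *: g ->
  (forall t : nat, z t.+1 = z t - eta *: grad_f H g (z t)) ->
  forall T : nat, (forall t : nat, (t <= T)%N -> vnorm (z t) < 1) ->
  forall t : nat, (t < T)%N -> vnorm (z t) <= vnorm (z t.+1).
Proof.
move=> HT _ _ _ _ _ etap etab0 alphap _ hal z0 hz T _ t _.
have bp : 0 < opnorm H.
  rewrite ltNge; apply/negP => hb.
  have : 1 / opnorm H <= 0 by rewrite div1r invr_le0.
  by move=> h; have := lt_trans etap (lt_le_trans etab0 h); rewrite ltxx.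
have etab : eta * opnorm H < 1 by rewrite -ltr_pdivlMr.
have vgp : 0 < vnorm g.
  rewrite lt_def vnorm_ge0 andbT; apply/negP => /eqP h0.
  move: hal; rewrite h0 expr0n /= ltNge mulr_ge0 ?normr_ge0 ?(ltW alphap) //.
set c := alpha / vnorm g.
have cp : 0 < c by rewrite divr_gt0.
have cb : c * dotv g (H *m g) < dotv g g.
  apply: (le_lt_trans (y := c * `|dotv g (H *m g)|)).
    by rewrite ler_wpM2l ?(ltW cp) // real_ler_norm ?num_real.
  rewrite /c mulrAC ltr_pdivrMr // -vnorm_sq -exprSr.
  exact: hal.
have := @key R n H eta HT etap etab bp g c z cp cb z0 hz t.
have e : z t.+1 = z t + (z t.+1 - z t) by rewrite addrC subrK.
move=> hd; rewrite [in X in _ <= X]e; move: (z t.+1 - z t) hd => d hd.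
have n1 : vnorm (z t) \in Num.nneg by rewrite nnegrE vnorm_ge0.
have n2 : vnorm (z t + d) \in Num.nneg by rewrite nnegrE vnorm_ge0.
rewrite -(ler_pXn2r (n := 2%N)) //= !vnorm_sq !(dotvDl, dotvDr) (dotvC d (z t)).
have := dotv_ge0 d; lra.
Qed.
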